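(* Let $q_1,q_2,q_3,q_4\in\widehat{\mathbb H}$ be four distinct points and let $q'_1,q'_2,q'_3,q'_4\in\widehat{\mathbb H}$ be another quadruple of distinct points. Then there exists a fractional linear transformation $T$ of $\widehat{\mathbb H}$ with $T(q_n)=q'_n$ for $n=1,2,3,4$ if and only if $$R_{\mathbb H}(q_1,q_2,q_3,q_4)=R_{\mathbb H}(q'_1,q'_2,q'_3,q'_4).$$
   Context: $\mathbb H$ denotes the quaternions, with conjugate $\bar q$, norm $|q|=\sqrt{q\bar q}$, real part $\operatorname{Re} q=(q+\bar q)/2$; $\widehat{\mathbb H}=\mathbb H\cup\{\infty\}$. The group $GL(2,\mathbb H)$ of invertible $2\times 2$ quaternionic matrices acts on $\widehat{\mathbb H}$ by fractional linear transformations $\pi(\gamma)(q)=(aq+b)(cq+d)^{-1}$ for $\gamma=\begin{pmatrix}a&b\\c&d\end{pmatrix}$; a fractional linear transformation is a map of the form $\pi(\gamma)$. For four distinct points $q_1,q_2,q_3,q_4\in\widehat{\mathbb H}$ the cross-ratio is $Q(q_1,q_2,q_3,q_4)=(q_2-q_1)^{-1}(q_4-q_1)(q_4-q_3)^{-1}(q_2-q_3)\in\mathbb H$, where if some $q_n=\infty$ the value is defined by letting $q_n\to\infty$ and taking the limit. Define $R_{\mathbb H}(q_1,q_2,q_3,q_4)=\bigl(|Q(q_1,q_2,q_3,q_4)|,\operatorname{Re}Q(q_1,q_2,q_3,q_4)\bigr)\in\mathbb R^2$. *)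

(* Defs.v *)
From mathcomp Require Import all_boot all_order all_algebra.
From mathcomp Require Import reals.
Set Implicit Arguments. Unset Strict Implicit. Unset Printing Implicit Defensive.
Import Order.TTheory GRing.Theory Num.Theory.
Local Open Scope ring_scope.

Section Quat.
Variable R : realType.

Record quat := Quat { qre : R; qi : R; qj : R; qk : R }.

Definition qadd (p q : quat) : quat :=
  Quat (qre p + qre q) (qi p + qi q) (qj p + qj q) (qk p + qk q).
Definition qopp (p : quat) : quat := Quat (- qre p) (- qi p) (- qj p) (- qk p).
Definition qsub (p q : quat) : quat := qadd p (qopp q).
Definition qzero : quat := Quat 0 0 0 0.
Definition qone : quat := Quat 1 0 0 0.

Definition qmul (p q : quat) : quat :=
  Quat (qre p * qre q - qi p * qi q - qj p * qj q - qk p * qk q)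
       (qre p * qi q + qi p * qre q + qj p * qk q - qk p * qj q)
       (qre p * qj q - qi p * qk q + qj p * qre q + qk p * qi q)
       (qre p * qk q + qi p * qj q - qj p * qi q + qk p * qre q).

Definition qconj (p : quat) : quat := Quat (qre p) (- qi p) (- qj p) (- qk p).
Definition qnorm2 (p : quat) : R := qre p ^+ 2 + qi p ^+ 2 + qj p ^+ 2 + qk p ^+ 2.
Definition qnorm (p : quat) : R := Num.sqrt (qnorm2 p).
(** inverse q^{-1} = conj q / |q|^2 (only used for q <> 0) *)
Definition qinv (p : quat) : quat :=
  let n := qnorm2 p in
  Quat (qre p / n) (- qi p / n) (- qj p / n) (- qk p / n).
Definition qRe (p : quat) : R := qre p.

Definition qeqb (p q : quat) : bool :=
  [&& qre p == qre q, qi p == qi q, qj p == qj q & qk p == qk q].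

(** Extended quaternions  \hat H = H ∪ {∞}:  Some q is q, None is ∞. *)
Definition Hhat := option quat.

Record mat2 := Mat2 { ma : quat; mb : quat; mc : quat; md : quat }.
Definition mmul (g h : mat2) : mat2 :=
  Mat2 (qadd (qmul (ma g) (ma h)) (qmul (mb g) (mc h)))
       (qadd (qmul (ma g) (mb h)) (qmul (mb g) (md h)))
       (qadd (qmul (mc g) (ma h)) (qmul (md g) (mc h)))
       (qadd (qmul (mc g) (mb h)) (qmul (md g) (md h))).
Definition mid : mat2 := Mat2 qone qzero qzero qone.
Definition invertible (g : mat2) : Prop :=
  exists h, mmul g h = mid /\ mmul h g = mid.

(** The action pi(g)(q) = (a q + b)(c q + d)^{-1} on \hat H, extended
    (by continuity) to q = ∞ and to the pole c q + d = 0. *)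
Definition flt (g : mat2) (x : Hhat) : Hhat :=
  match x with
  | Some q =>
      let den := qadd (qmul (mc g) q) (md g) in
      if qeqb den qzero then None
      else Some (qmul (qadd (qmul (ma g) q) (mb g)) (qinv den))
  | None => if qeqb (mc g) qzero then None else Some (qmul (ma g) (qinv (mc g)))
  end.

Definition is_flt (T : Hhat -> Hhat) : Prop :=
  exists g, invertible g /\ forall x, T x = flt g x.

Definition crossQ (q1 q2 q3 q4 : quat) : quat :=
  qmul (qmul (qmul (qinv (qsub q2 q1)) (qsub q4 q1)) (qinv (qsub q4 q3)))
       (qsub q2 q3).

(** R_H(q1,q2,q3,q4) = (|Q|, Re Q), with the values at ∞ obtained as limits
    q_n -> ∞ (at most one point is ∞ since the points are distinct):
    - q1 = ∞ : Q -> (q4-q3)^{-1}(q2-q3)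
    - q3 = ∞ : Q -> (q2-q1)^{-1}(q4-q1)
    - q4 = ∞ : Q -> (q2-q1)^{-1}(q2-q3)
    - q2 = ∞ : Q is asymptotic to q2^{-1} A q2 with A = (q4-q1)(q4-q3)^{-1};
      |Q| -> |A| and Re Q -> Re A (both conjugation invariant), so R_H -> (|A|, Re A). *)
Definition RQ (Q : quat) : R * R := (qnorm Q, qRe Q).

Definition RH (x1 x2 x3 x4 : Hhat) : R * R :=
  match x1, x2, x3, x4 with
  | Some q1, Some q2, Some q3, Some q4 => RQ (crossQ q1 q2 q3 q4)
  | None, Some q2, Some q3, Some q4 => RQ (qmul (qinv (qsub q4 q3)) (qsub q2 q3))
  | Some q1, None, Some q3, Some q4 => RQ (qmul (qsub q4 q1) (qinv (qsub q4 q3)))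
  | Some q1, Some q2, None, Some q4 => RQ (qmul (qinv (qsub q2 q1)) (qsub q4 q1))
  | Some q1, Some q2, Some q3, None => RQ (qmul (qinv (qsub q2 q1)) (qsub q2 q3))
  | _, _, _, _ => (0, 0) (* not reached for distinct points *)
  end.

Definition distinct4 (x1 x2 x3 x4 : Hhat) : Prop :=
  x1 <> x2 /\ x1 <> x3 /\ x1 <> x4 /\ x2 <> x3 /\ x2 <> x4 /\ x3 <> x4.

End Quat.

(* Main.v *)
From HB Require Import structures.
Require Import Defs.
From mathcomp Require Import all_boot all_order all_algebra.
From mathcomp Require Import reals.
From mathcomp Require Import ring lra.
Set Implicit Arguments. Unset Strict Implicit. Unset Printing Implicit Defensive.
Import Order.TTheory GRing.Theory Num.Theory.
Local Open Scope ring_scope.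

Section Q.
Variable R : realType.

Definition q2t (p : quat R) := (qre p, qi p, qj p, qk p).
Definition t2q (t : R * R * R * R) := let: (a,b,c,d) := t in Quat a b c d.
Lemma q2tK : cancel q2t t2q. Proof. by case. Qed.
HB.instance Definition _ := Choice.copy (quat R) (can_type q2tK).

Lemma qeqE (a b c d a' b' c' d' : R) :
  a = a' -> b = b' -> c = c' -> d = d' -> Quat a b c d = Quat a' b' c' d'.
Proof. by move=> -> -> -> ->. Qed.

Ltac qsolve := repeat match goal with [ p : quat R |- _ ] => destruct p end;
  rewrite /qadd /qmul /qopp /qzero /qone /=; apply: qeqE; ring.

Lemma qaddA : associative (@qadd R). Proof. move=> *; qsolve. Qed.
Lemma qaddC : commutative (@qadd R). Proof. move=> *; qsolve. Qed.
Lemma qadd0 : left_id (qzero R) (@qadd R). Proof. move=> *; qsolve. Qed.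
Lemma qaddN : left_inverse (qzero R) (@qopp R) (@qadd R). Proof. move=> *; qsolve. Qed.
Lemma qmulA : associative (@qmul R). Proof. move=> *; qsolve. Qed.
Lemma qmul1 : left_id (qone R) (@qmul R). Proof. move=> *; qsolve. Qed.
Lemma qmulr1 : right_id (qone R) (@qmul R). Proof. move=> *; qsolve. Qed.
Lemma qmulDl : left_distributive (@qmul R) (@qadd R). Proof. move=> *; qsolve. Qed.
Lemma qmulDr : right_distributive (@qmul R) (@qadd R). Proof. move=> *; qsolve. Qed.
Lemma qone0 : (qone R) != qzero R.
Proof. apply/eqP => -[] /eqP; rewrite oner_eq0. by []. Qed.

HB.instance Definition _ := GRing.isNzRing.Build (quat R)
  qaddA qaddC qadd0 qaddN qmulA qmul1 qmulr1 qmulDl qmulDr qone0.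

Lemma qnorm2_eq0 (p : quat R) : (qnorm2 p == 0) = (p == 0).
Proof.
apply/eqP/eqP => [|->]; last by rewrite /qnorm2 /= expr0n /=; lra.
case: p => a b c d; rewrite /qnorm2 /= => H.
have ha : a ^+ 2 = 0 by apply/eqP; rewrite eq_le sqr_ge0 andbT; nra.
have hb : b ^+ 2 = 0 by apply/eqP; rewrite eq_le sqr_ge0 andbT; nra.
have hc : c ^+ 2 = 0 by apply/eqP; rewrite eq_le sqr_ge0 andbT; nra.
have hd : d ^+ 2 = 0 by apply/eqP; rewrite eq_le sqr_ge0 andbT; nra.
by move: ha hb hc hd => /eqP; rewrite sqrf_eq0 => /eqP-> /eqP; rewrite sqrf_eq0 => /eqP->
  /eqP; rewrite sqrf_eq0 => /eqP-> /eqP; rewrite sqrf_eq0 => /eqP->.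
Qed.

Definition qunit := [pred p : quat R | p != 0].

Lemma qmulV : {in qunit, left_inverse 1 (@qinv R) *%R}.
Proof.
move=> p; rewrite inE -qnorm2_eq0 => H.
case: p H => a b c d; rewrite /qnorm2 /= => H.
rewrite /GRing.mul /= /qmul /qinv /qnorm2 /=; apply: qeqE => //=; field => //.
Qed.

Lemma qmulVr : {in qunit, right_inverse 1 (@qinv R) *%R}.
Proof.
move=> p; rewrite inE -qnorm2_eq0 => H.
case: p H => a b c d; rewrite /qnorm2 /= => H.
rewrite /GRing.mul /= /qmul /qinv /qnorm2 /=; apply: qeqE => //=; field => //.
Qed.

Lemma qunitP : forall x y : quat R, y * x = 1 /\ x * y = 1 -> qunit x.
Proof.
move=> x y [_ H]; rewrite inE; apply/eqP => Hx; move: H; rewrite Hx mul0r.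
by move/eqP; rewrite eq_sym oner_eq0.
Qed.

Lemma qinv_out : {in [predC qunit], (@qinv R) =1 id}.
Proof.
move=> x; rewrite !inE negbK => /eqP ->.
rewrite /qinv /= /qnorm2 /=; apply: qeqE; rewrite /= ?oppr0 ?expr0n /= !mul0r //.
Qed.

HB.instance Definition _ := GRing.NzRing_hasMulInverse.Build (quat R)
  qmulV qmulVr qunitP qinv_out.

Lemma qunitE (p : quat R) : (p \is a GRing.unit) = (p != 0).
Proof. by []. Qed.

Lemma qmulE (p q : quat R) : qmul p q = p * q. Proof. by []. Qed.
Lemma qaddE (p q : quat R) : qadd p q = p + q. Proof. by []. Qed.
Lemma qsubE (p q : quat R) : qsub p q = p - q. Proof. by []. Qed.
Lemma qinvE (p : quat R) : qinv p = p^-1. Proof. by []. Qed.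
Lemma qzeroE : qzero R = 0. Proof. by []. Qed.
Lemma qoneE : qone R = 1. Proof. by []. Qed.
Lemma qeqbE (p q : quat R) : qeqb p q = (p == q).
Proof.
case: p q => a b c d [a' b' c' d']; rewrite /qeqb /=.
apply/idP/eqP => [/and4P[/eqP-> /eqP-> /eqP-> /eqP->] //|[-> -> -> ->]].
by rewrite !eqxx.
Qed.


Lemma qnorm2M (p q : quat R) : qnorm2 (p * q) = qnorm2 p * qnorm2 q.
Proof. case: p q => a b c d [a' b' c' d']; rewrite -qmulE /qnorm2 /qmul /=; ring. Qed.

Lemma qReC (p q : quat R) : qRe (p * q) = qRe (q * p).
Proof. case: p q => a b c d [a' b' c' d']; rewrite -!qmulE /qRe /qmul /=; ring. Qed.

Lemma RQC (p q : quat R) : RQ (p * q) = RQ (q * p).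
Proof. by rewrite /RQ /qnorm !qnorm2M mulrC qReC. Qed.

Lemma RQconj (l Q : quat R) : l != 0 -> RQ (l^-1 * Q * l) = RQ Q.
Proof. by move=> hl; rewrite RQC mulrA divrr ?mul1r. Qed.


Local Notation H := (quat R).
Definition vec := (H * H)%type.
Definition col (x : Hhat R) : vec := match x with Some q => (q, 1) | None => (1, 0) end.
Definition row (x : Hhat R) : vec := match x with Some q => (1, - q) | None => (0, 1) end.
Definition dot (r z : vec) : H := r.1 * z.1 + r.2 * z.2.
Definition mv (g : mat2 R) (z : vec) : vec :=
  (ma g * z.1 + mb g * z.2, mc g * z.1 + md g * z.2).
Definition rv (r : vec) (g : mat2 R) : vec :=
  (r.1 * ma g + r.2 * mc g, r.1 * mb g + r.2 * md g).
Definition scal (z : vec) (l : H) : vec := (z.1 * l, z.2 * l).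
Definition lscal (l : H) (r : vec) : vec := (l * r.1, l * r.2).
Definition delta x y := dot (row x) (col y).

Lemma mmulE (g h : mat2 R) : mmul g h =
  Mat2 (ma g * ma h + mb g * mc h) (ma g * mb h + mb g * md h)
       (mc g * ma h + md g * mc h) (mc g * mb h + md g * md h).
Proof. by []. Qed.
Lemma midE : mid R = Mat2 1 0 0 1. Proof. by []. Qed.

Lemma mv_mmul g h z : mv (mmul g h) z = mv g (mv h z).
Proof.
case: z => u v; rewrite /mv mmulE /=; congr pair;
by rewrite !mulrDl !mulrDr !mulrA addrACA.
Qed.

Lemma rv_mmul r g h : rv r (mmul g h) = rv (rv r g) h.
Proof.
case: r => u v; rewrite /rv mmulE /=; congr pair;
by rewrite !mulrDl !mulrDr !mulrA addrACA.
Qed.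

Lemma dot_mv r g z : dot r (mv g z) = dot (rv r g) z.
Proof.
case: r z => u v [x y]; rewrite /dot /rv /mv /=.
by rewrite !mulrDl !mulrDr !mulrA addrACA.
Qed.

Lemma mv_mid z : mv (mid R) z = z.
Proof. by case: z => u v; rewrite /mv midE /= !mul1r !mul0r !addr0 !add0r. Qed.
Lemma rv_mid r : rv r (mid R) = r.
Proof. by case: r => u v; rewrite /rv midE /= !mulr1 !mulr0 !addr0 !add0r. Qed.

Lemma mv_scal g z l : mv g (scal z l) = scal (mv g z) l.
Proof. by case: z => u v; rewrite /mv /scal /= !mulrDl !mulrA. Qed.
Lemma scal_scal z a b : scal (scal z a) b = scal z (a * b).
Proof. by case: z => u v; rewrite /scal /= !mulrA. Qed.
Lemma dot_scal r z l : dot r (scal z l) = dot r z * l.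
Proof. by rewrite /dot /scal /= mulrDl !mulrA. Qed.
Lemma dot_lscal l r z : dot (lscal l r) z = l * dot r z.
Proof. by rewrite /dot /lscal /= mulrDr !mulrA. Qed.

Lemma delta_xx x : delta x x = 0.
Proof. by case: x => [q|]; rewrite /delta /dot /= ?mul1r ?mulr1 ?mulr0 ?mul0r ?addr0 ?subrr. Qed.

Lemma delta_SS q p : delta (Some q) (Some p) = p - q.
Proof. by rewrite /delta /dot /= mul1r mulr1. Qed.
Lemma delta_NS p : delta None (Some p) = 1.
Proof. by rewrite /delta /dot /= mul0r add0r mul1r. Qed.
Lemma delta_SN p : delta (Some p) None = 1.
Proof. by rewrite /delta /dot /= mulr0 addr0 mul1r. Qed.

Lemma delta_neq0 x y : x <> y -> delta x y != 0.
Proof.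
case: x => [q|]; case: y => [p|] //= hxy.
- by rewrite delta_SS subr_eq0; apply/eqP => e; apply: hxy; rewrite e.
- by rewrite delta_SN oner_eq0.
- by rewrite delta_NS oner_eq0.
Qed.

Lemma col_neq0 x : col x <> (0, 0).
Proof.
case: x=>[q|] e; [have /eqP := congr1 snd e | have /eqP := congr1 fst e];
by rewrite /= oner_eq0.
Qed.
Lemma row_neq0 x : row x <> (0, 0).
Proof.
case: x=>[q|] e; [have /eqP := congr1 fst e | have /eqP := congr1 snd e];
by rewrite /= oner_eq0.
Qed.

Lemma scal_neq0 x l : l != 0 -> scal (col x) l <> (0, 0).
Proof.
move=> hl; case: x=>[q|] e; [have := congr1 snd e | have := congr1 fst e];
by rewrite /= mul1r => e'; rewrite e' eqxx in hl.
Qed.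


Lemma fltS g q : flt g (Some q) =
  if mc g * q + md g == 0 then None
  else Some ((ma g * q + mb g) * (mc g * q + md g)^-1).
Proof. by rewrite /flt qeqbE. Qed.
Lemma fltN g : flt g None =
  if mc g == 0 then None else Some (ma g * (mc g)^-1).
Proof. by rewrite /flt qeqbE. Qed.

Lemma pairE (a b c d : H) : a = c -> b = d -> (a, b) = (c, d).
Proof. by move=> -> ->. Qed.

Lemma fltK g x : mv g (col x) <> (0, 0) ->
  exists l, l != 0 /\ mv g (col x) = scal (col (flt g x)) l.
Proof.
case: x => [q|]; rewrite /mv [col _]/= [(_,_).1]/= [(_,_).2]/=.
- rewrite fltS !mulr1; case: eqP => hd nz.
  + exists (ma g * q + mb g); split; last by rewrite /scal /= mul1r mul0r hd.
    by apply/eqP => e; apply: nz; rewrite e hd.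
  + exists (mc g * q + md g); split; first by apply/eqP.
    by rewrite /scal /= mul1r divrK //; apply/eqP.
- rewrite fltN !mulr0 !mulr1 !addr0; case: eqP => hc nz.
  + exists (ma g); split; last by rewrite /scal /= mul1r mul0r hc.
    by apply/eqP => e; apply: nz; rewrite e hc.
  + exists (mc g); split; first by apply/eqP.
    by rewrite /scal /= mul1r divrK //; apply/eqP.
Qed.

Lemma col_inj x y l l' : l != 0 -> scal (col x) l = scal (col y) l' -> x = y.
Proof.
move=> hl; case: x => [q|]; case: y => [p|] //= e.
- have e2 := congr1 snd e; have e1 := congr1 fst e; move: e1 e2 => /=.
  rewrite !mul1r => e1 e2; subst l'.
  have ul : l \is a GRing.unit := hl.
  by congr Some; rewrite -(mulrK ul q) e1 mulrK.
- have := congr1 snd e; rewrite /= mul1r mul0r => e'; by rewrite e' eqxx in hl.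
- have := congr1 snd e; rewrite /= mul1r mul0r => e'.
  have := congr1 fst e; rewrite /= mul1r -e' mulr0 => e''.
  by rewrite e'' eqxx in hl.
Qed.

Lemma flt_char g x y l : l != 0 -> mv g (col x) = scal (col y) l -> flt g x = y.
Proof.
move=> hl e; have nz : mv g (col x) <> (0, 0) by rewrite e; apply: scal_neq0.
have [l' [hl' e']] := fltK nz.
by apply: (@col_inj _ _ l' l) => //; rewrite -e'.
Qed.

Lemma inv_mv g z : invertible g -> z <> (0, 0) -> mv g z <> (0, 0).
Proof.
move=> [h [_ hg]] nz e; apply: nz.
by rewrite -(mv_mid z) -hg mv_mmul e /mv /= !mulr0 !addr0.
Qed.

Lemma flt_mmul (A B : mat2 R) x : invertible A -> invertible B ->
  flt (mmul A B) x = flt A (flt B x).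
Proof.
move=> iA iB.
have [l [hl e]] := fltK (inv_mv iB (@col_neq0 x)).
have [l' [hl' e']] := fltK (inv_mv iA (@col_neq0 (flt B x))).
apply: (@flt_char _ _ _ (l' * l)).
  by rewrite -qunitE unitrMl.
by rewrite mv_mmul e mv_scal e' scal_scal.
Qed.

Lemma flt_mid x : flt (mid R) x = x.
Proof. by apply: (@flt_char _ _ _ 1); rewrite ?oner_eq0 // mv_mid /scal !mulr1; case: (col x). Qed.


Lemma mulr_eq0_unit (a l : H) : l != 0 -> a * l = 0 -> a = 0.
Proof.
move=> hl e; have ul : l \is a GRing.unit := hl.
by rewrite -(mulrK ul a) e mul0r.
Qed.

Lemma rv0 g : rv (0, 0) g = (0, 0).
Proof. by rewrite /rv /= !mul0r addr0. Qed.

Lemma row_flt (g : mat2 R) x : invertible g ->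
  exists m, m != 0 /\ row x = rv (lscal m (row (flt g x))) g.
Proof.
move=> ig; case: (ig) => h [gh hg].
have [l [hl e]] := fltK (inv_mv ig (@col_neq0 x)).
set r' := rv (row x) h.
have rr : rv r' g = row x by rewrite /r' -rv_mmul hg rv_mid.
clearbody r'.
have d0 : dot r' (col (flt g x)) = 0.
  apply: (mulr_eq0_unit hl); rewrite -dot_scal -e dot_mv rr; exact: delta_xx.
have r'nz : r' <> (0, 0) by move=> e0; apply: (@row_neq0 x); rewrite -rr e0 rv0.
move: r' rr d0 r'nz => [a b] rr d0 nz.
case: (flt g x) d0 => [p|]; rewrite /dot /=.
- rewrite mulr1 => /eqP; rewrite addr_eq0 => /eqP e2'.
  have e2 : b = - (a * p) by rewrite e2' opprK.
  exists a; split.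
    by apply/eqP => e1; apply: nz; rewrite e2 e1 mul0r oppr0.
  by rewrite -rr e2; congr rv; rewrite /lscal /= mulr1 mulrN.
- rewrite mulr0 addr0 mulr1 => e1.
  exists b; split.
    by apply/eqP => e2; apply: nz; rewrite e1 e2.
  by rewrite -rr e1; congr rv; rewrite /lscal /= mulr0 mulr1.
Qed.

Lemma delta_flt (g : mat2 R) x y m l :
  row x = rv (lscal m (row (flt g x))) g -> mv g (col y) = scal (col (flt g y)) l ->
  delta x y = m * delta (flt g x) (flt g y) * l.
Proof.
by move=> er ec; rewrite /delta er -dot_mv ec dot_scal dot_lscal.
Qed.

Lemma flt_inj (g : mat2 R) x y : invertible g -> flt g x = flt g y -> x = y.
Proof.
move=> ig; case: (ig) => h [gh hg] e.
have ih : invertible h by exists g.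
by rewrite -(flt_mid x) -(flt_mid y) -hg !flt_mmul // e.
Qed.


Definition Qh x1 x2 x3 x4 :=
  (delta x1 x2)^-1 * delta x1 x4 * (delta x3 x4)^-1 * delta x3 x2.

Lemma alg (m1 m3 l2 l4 a b c d : H) :
  m1 \is a GRing.unit -> m3 \is a GRing.unit -> l2 \is a GRing.unit ->
  l4 \is a GRing.unit -> a \is a GRing.unit -> c \is a GRing.unit ->
  (m1 * a * l2)^-1 * (m1 * b * l4) * (m3 * c * l4)^-1 * (m3 * d * l2) =
  l2^-1 * (a^-1 * b * c^-1 * d) * l2.
Proof.
move=> u1 u3 u2 u4 ua uc.
rewrite !invrM ?unitrMl // !mulrA.
by rewrite mulrVK // mulrK // mulrVK.
Qed.

Lemma Qh_flt (g : mat2 R) x1 x2 x3 x4 : invertible g -> distinct4 x1 x2 x3 x4 ->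
  RQ (Qh (flt g x1) (flt g x2) (flt g x3) (flt g x4)) = RQ (Qh x1 x2 x3 x4).
Proof.
move=> ig [d12 [d13 [d14 [d23 [d24 d34]]]]].
have [m1 [hm1 e1]] := row_flt x1 ig.
have [m3 [hm3 e3]] := row_flt x3 ig.
have [l2 [hl2 e2]] := fltK (inv_mv ig (@col_neq0 x2)).
have [l4 [hl4 e4]] := fltK (inv_mv ig (@col_neq0 x4)).
have fi : forall x y, x <> y -> delta (flt g x) (flt g y) \is a GRing.unit.
  by move=> x y nxy; rewrite qunitE; apply: delta_neq0 => /(flt_inj ig).
rewrite /Qh (delta_flt e1 e2) (delta_flt e1 e4) (delta_flt e3 e4) (delta_flt e3 e2).
rewrite alg ?qunitE //; try by rewrite -qunitE; apply: fi.
by rewrite RQconj.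
Qed.


Lemma RH_Qh x1 x2 x3 x4 : distinct4 x1 x2 x3 x4 ->
  RH x1 x2 x3 x4 = RQ (Qh x1 x2 x3 x4).
Proof.
case: x1 => [q1|]; case: x2 => [q2|]; case: x3 => [q3|]; case: x4 => [q4|];
move=> [d12 [d13 [d14 [d23 [d24 d34]]]]] //;
rewrite /RH /Qh ?delta_SS ?delta_SN ?delta_NS /crossQ ?qmulE ?qinvE ?qsubE
  ?invr1 ?mul1r ?mulr1 //.
Qed.


Lemma mmulA (A B C : mat2 R) : mmul A (mmul B C) = mmul (mmul A B) C.
Proof.
rewrite !mmulE /=; congr Mat2;
by rewrite !mulrDl !mulrDr !mulrA addrACA.
Qed.

Lemma mid_mmul (A : mat2 R) : mmul (mid R) A = A.
Proof. by case: A => a b c d; rewrite mmulE midE /= !mul1r !mul0r !addr0 !add0r. Qed.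
Lemma mmul_mid (A : mat2 R) : mmul A (mid R) = A.
Proof. by case: A => a b c d; rewrite mmulE midE /= !mulr1 !mulr0 !addr0 !add0r. Qed.

Lemma inv_mmul (A B : mat2 R) : invertible A -> invertible B -> invertible (mmul A B).
Proof.
move=> [A' [h1 h2]] [B' [h3 h4]]; exists (mmul B' A'); split.
- by rewrite -mmulA (mmulA B) h3 mid_mmul.
- by rewrite -mmulA (mmulA A') h2 mid_mmul.
Qed.

Lemma inv_upper (a b d : H) : a != 0 -> d != 0 -> invertible (Mat2 a b 0 d).
Proof.
move=> ha hd; have ua : a \is a GRing.unit := ha; have ud : d \is a GRing.unit := hd.
exists (Mat2 a^-1 (- (a^-1 * b * d^-1)) 0 d^-1); rewrite !mmulE midE /=; split; congr Mat2.
- by rewrite mulr0 addr0 divrr.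
- by rewrite mulrN !mulrA divrr // mul1r addNr.
- by rewrite mul0r mulr0 addr0.
- by rewrite mul0r add0r divrr.
- by rewrite mulr0 addr0 mulVr.
- by rewrite mulNr mulrVK // addrN.
- by rewrite mul0r mulr0 addr0.
- by rewrite mul0r add0r mulVr.
Qed.

Lemma inv_M (q : H) : invertible (Mat2 0 1 1 (- q)).
Proof.
exists (Mat2 q 1 1 0); rewrite !mmulE midE /=; split; congr Mat2;
rewrite ?mul0r ?mulr0 ?mul1r ?mulr1 ?add0r ?addr0 //.
all: try by rewrite addrN.
all: try by rewrite mulrN mulr1 addrN.
Qed.

Lemma nf_fin (q1 q2 : H) : q1 != q2 -> exists U : mat2 R, invertible U /\
  flt U (Some q1) = Some 0 /\ flt U (Some q2) = Some 1 /\ flt U None = None.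
Proof.
move=> hq; have hd : q2 - q1 != 0 by rewrite subr_eq0 eq_sym.
exists (Mat2 1 (-q1) 0 (q2 - q1)); split; first by apply: inv_upper; rewrite ?oner_eq0.
rewrite !fltS fltN /= !mul0r !add0r (negbTE hd) eqxx !mul1r subrr mul0r; split => //.
by rewrite divrr.
Qed.

Lemma nf x1 x2 x3 : x1 <> x2 -> x1 <> x3 -> x2 <> x3 ->
  exists g : mat2 R, invertible g /\
  flt g x1 = Some 0 /\ flt g x2 = Some 1 /\ flt g x3 = None.
Proof.
case: x3 => [q3|] h12 h13 h23.
- set M := Mat2 0 1 1 (-q3).
  have iM : invertible M by apply: inv_M.
  have e3 : flt M (Some q3) = None by rewrite fltS /= mul1r subrr eqxx.
  have n1 : flt M x1 <> None by rewrite -e3 => /(flt_inj iM).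
  have n2 : flt M x2 <> None by rewrite -e3 => /(flt_inj iM).
  have n12 : flt M x1 <> flt M x2 by move/(flt_inj iM).
  case E1 : (flt M x1) n1 n12 => [p1|] // _; case E2 : (flt M x2) n2 => [p2|] // _ n12.
  have [U [iU [u1 [u2 u3]]]] : exists U : mat2 R, invertible U /\
    flt U (Some p1) = Some 0 /\ flt U (Some p2) = Some 1 /\ flt U None = None.
    by apply: nf_fin; apply/eqP => e; apply: n12; rewrite e.
  exists (mmul U M); split; first exact: inv_mmul.
  by rewrite !flt_mmul // E1 E2 e3.
- case: x1 h12 h13 => [q1|] // h12 _; case: x2 h12 h23 => [q2|] // h12 _.
  by apply: nf_fin; apply/eqP => e; apply: h12; rewrite e.
Qed.


Lemma conj_ex (w w' : H) : qnorm2 w = qnorm2 w' -> qRe w = qRe w' ->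
  exists l, l != 0 /\ l * w = w' * l.
Proof.
move=> hn hr.
have [L1|L1] := eqVneq (w' - qconj w) 0.
- have ew : w' = qconj w by apply/eqP; rewrite -subr_eq0 L1.
  subst w'.
  set i := Quat (0:R) 1 0 0; set j := Quat (0:R) 0 1 0.
  have [L2|L2] := eqVneq (i * w - w * i) 0; last first.
    exists (i * w - w * i); split => //.
    case: w {hn hr L1 L2} => a b c d; rewrite /i -!qmulE -!qsubE /qsub /qmul /qadd /qopp /qconj /=.
    apply: qeqE; ring.
  have [L3|L3] := eqVneq (j * w - w * j) 0; last first.
    exists (j * w - w * j); split => //.
    case: w {hn hr L1 L2 L3} => a b c d; rewrite /j -!qmulE -!qsubE /qsub /qmul /qadd /qopp /qconj /=.
    apply: qeqE; ring.
  exists 1; split; first by rewrite oner_eq0.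
  rewrite mul1r mulr1.
  move: L2 L3; case: w {hn hr L1} => a b c d.
  rewrite /i /j -!qmulE -!qsubE /qsub /qmul /qadd /qopp /qconj /= => -[] e1 e2 e3 e4 [] f1 f2 f3 f4.
  apply: qeqE => //; lra.
- exists (w' - qconj w); split => //.
  move: hn hr {L1}; case: w => a b c d; case: w' => a' b' c' d'.
  rewrite /qnorm2 /qRe /= => hn hr; subst a'.
  rewrite -!qmulE -!qsubE /qsub /qmul /qadd /qopp /qconj /=.
  apply: qeqE; try ring.
  nra.
Qed.


Lemma qnorm2_ge0 (p : H) : 0 <= qnorm2 p.
Proof. by rewrite /qnorm2 !addr_ge0 ?sqr_ge0. Qed.

Lemma fltC (l q : H) : l != 0 -> flt (Mat2 l 0 0 l) (Some q) = Some (l * q * l^-1).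
Proof. by move=> hl; rewrite fltS /= mul0r add0r (negbTE hl) addr0. Qed.

End Q.

Theorem mainTheorem1 (R : realType) (q1 q2 q3 q4 p1 p2 p3 p4 : Hhat R) :
  distinct4 q1 q2 q3 q4 -> distinct4 p1 p2 p3 p4 ->
  ((exists T : Hhat R -> Hhat R,
      is_flt T /\ T q1 = p1 /\ T q2 = p2 /\ T q3 = p3 /\ T q4 = p4)
   <-> RH q1 q2 q3 q4 = RH p1 p2 p3 p4).
Proof.
move=> dq dp; split.
- case=> T [[g [ig eT]] [e1 [e2 [e3 e4]]]].
  by rewrite RH_Qh // RH_Qh // -e1 -e2 -e3 -e4 !eT Qh_flt.
- move=> hR.
  have nfw : forall x1 x2 x3 x4 : Hhat R, distinct4 x1 x2 x3 x4 ->
     exists g w, invertible g /\ flt g x1 = Some 0 /\ flt g x2 = Some 1 /\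
        flt g x3 = None /\ flt g x4 = Some w /\ RH x1 x2 x3 x4 = RQ w.
    move=> x1 x2 x3 x4 dx; have [d12 [d13 [d14 [d23 [d24 d34]]]]] := dx.
    have [g [ig [g1 [g2 g3]]]] := nf d12 d13 d23.
    case E : (flt g x4) => [w|]; last first.
      by exfalso; apply: d34; apply: (flt_inj ig); rewrite E g3.
    exists g, w; do 5!split => //.
    rewrite RH_Qh // -(Qh_flt ig dx) g1 g2 g3 E /Qh !delta_SS !delta_NS.
    by rewrite !subr0 !invr1 !mul1r !mulr1.
  have [g [w [ig [g1 [g2 [g3 [g4 Rw]]]]]]] := nfw _ _ _ _ dq.
  have [h [w' [ih [h1 [h2 [h3 [h4 Rw']]]]]]] := nfw _ _ _ _ dp.
  move: hR; rewrite Rw Rw' /RQ => -[hn hre].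
  have hn2 : qnorm2 w = qnorm2 w'.
    by rewrite -(sqr_sqrtr (qnorm2_ge0 w)) -(sqr_sqrtr (qnorm2_ge0 w')) -/(qnorm w) hn.
  have [l [hl el]] := conj_ex hn2 hre.
  have [h' [hh' h'h]] := ih.
  have ih' : invertible h' by exists h.
  have iC : invertible (Mat2 l 0 0 l) by apply: inv_upper.
  have back : forall x, flt h' (flt h x) = x.
    by move=> x; rewrite -flt_mmul // h'h flt_mid.
  exists (flt (mmul h' (mmul (Mat2 l 0 0 l) g))); split.
    by exists (mmul h' (mmul (Mat2 l 0 0 l) g)); split => //; apply: inv_mmul => //; apply: inv_mmul.
  have ul : l \is a GRing.unit := hl.
  rewrite !flt_mmul //; try by apply: inv_mmul.
  rewrite g1 g2 g3 g4 !fltC // mulr0 mul0r mulr1 divrr // el mulrK //.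
  rewrite -h1 -h2 -h4 !back; split => //; split => //; split => //.
  by rewrite fltN /= eqxx -h3 back.
Qed.
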